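(* Let $M$ be a $\lambda$-term and $\vec x=\langle x_1,\dots,x_n\rangle$ a list of distinct variables with $FV(M)\subseteq\vec x$. There is a natural isomorphism of functors $((SD)^n)^{o}\times D\to\mathrm{Set}$ \[\llbracket M\rrbracket_{\vec x}\cong T_D(M)_{\vec x}.\]
   Context: $[n]=\{1,\dots,n\}$. Fix a class $\mathcal C$ of functions between finite ordinals equal to one of: all bijections, all injections, all surjections, all functions. For a small category $X$, $SX$ is the category whose objects are finite lists of objects of $X$ and whose morphisms $\langle x_1,\dots,x_n\rangle\to\langle y_1,\dots,y_m\rangle$ are $\langle\alpha,f_1,\dots,f_m\rangle$ with $\alpha:[m]\to[n]$ in $\mathcal C$, $f_i:x_{\alpha(i)}\to y_i$; composite of $\langle\alpha,\vec f\rangle$ then $\langle\beta,\vec g\rangle$ is $\langle\alpha\circ\beta,(g_i\circ f_{\beta(i)})_i\rangle$; tensor $\oplus$ is concatenation, unit $\langle\rangle$. Types: fix a small category $A$. $D=D_A$ is the colimit of $D_0=A$, $D_{k+1}=(SD_k)^{o}\times D_k\sqcup A$ along the canonical inclusions. Concretely its objects are $a::=o\mid\langle a_1,\dots,a_k\rangle\Rightarrow a$ ($o\in\mathrm{Ob}(A)$); its morphisms are those of $A$ between atoms, and $\langle\alpha,\vec f\rangle\Rightarrow f:(\vec a\Rightarrow a)\to(\vec a'\Rightarrow a')$ for $\langle\alpha,\vec f\rangle:\vec a'\to\vec a$ in $SD$ and $f:a\to a'$ in $D$ (composed componentwise); no others. $SD:=S(D_A)$. Contexts are objects $\Delta=\langle\vec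 a_1,\dots,\vec a_n\rangle$ of $(SD)^n$, written $x_1:\vec a_1,\dots,x_n:\vec a_n$; $\Gamma\otimes\Delta$ is componentwise concatenation; $\Delta\oplus\langle\vec a\rangle$ appends a component. For contexts $\Gamma_1,\dots,\Gamma_k$ and $\alpha:[k']\to[k]$ in $\mathcal C$, $\alpha^{\star}:\bigotimes_{i=1}^k\Gamma_i\to\bigotimes_{j=1}^{k'}\Gamma_{\alpha(j)}$ is, componentwise, the morphism $\langle\bar\alpha,\text{identities}\rangle$ where $\bar\alpha$ sends the $p$-th position of the $j$-th block (a copy of the block of $\Gamma_{\alpha(j)}$) to the $p$-th position of the $\alpha(j)$-th block. Denotation: for $FV(M)\subseteq\vec x$, $\llbracket M\rrbracket_{\vec x}:((SD)^n)^{o}\times D\to\mathrm{Set}$ is defined by induction (functorial action induced by hom-functors and universal property of coends; in the abstraction case a morphism $\langle\alpha,\vec f\rangle\Rightarrow f$ acts as $\llbracket M\rrbracket(1_\Delta\oplus\langle\alpha,\vec f\rangle,f)$): $\llbracket x_i\rrbracket_{\vec x}(\Delta,a)=(SD)^n(\Delta,\langle\langle\rangle,\dots,\langle a\rangle,\dots,\langle\rangle\rangle)$ ($\langle a\rangle$ in position $i$); $\llbracket\lambda x.M\rrbracket_{\vec x}(\Delta,a)=\llbracket M\rrbracket_{\vec x\oplus\langle x\rangle}(\Delta\oplus\langle\vec a'\rangle,a')$ if $a=\vec a'\Rightarrow a'$ and $\emptyset$ if $a$ is atomic; \[\llbracket MN\rrbracket_{\vec x}(\Delta,a)=\int^{\vec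 a=\langle a_1,\dots,a_k\rangle\in SD}\int^{\Gamma_0,\dots,\Gamma_k\in(SD)^n}\llbracket M\rrbracket_{\vec x}(\Gamma_0,\vec a\Rightarrow a)\times\prod_{i=1}^k\llbracket N\rrbracket_{\vec x}(\Gamma_i,a_i)\times(SD)^n\Big(\Delta,\bigotimes_{i=0}^k\Gamma_i\Big).\] Type system $E^S_A$ (judgments $\Delta\vdash M:a$, $\Delta\in(SD)^n$, $a\in D$; derivations record the morphisms used): (Var) from morphisms $f_j:\vec a_j\to\langle\rangle$ ($j\neq i$) and $f_i:\vec a_i\to\langle a\rangle$ in $SD$ infer $x_1:\vec a_1,\dots,x_n:\vec a_n\vdash x_i:a$; (Abs) from $\Delta,x:\vec a\vdash M:a$ infer $\Delta\vdash\lambda x.M:\vec a\Rightarrow a$; (App) from $\Gamma_0\vdash M:\langle a_1,\dots,a_k\rangle\Rightarrow a$, $\Gamma_i\vdash N:a_i$ ($1\le i\le k$) and a morphism $\eta:\Delta\to\bigotimes_{i=0}^k\Gamma_i$ in $(SD)^n$ infer $\Delta\vdash MN:a$. Right action of $\eta=\langle g_1,\dots,g_n\rangle:\Delta'\to\Delta$ on a derivation $\pi$ of $\Delta\vdash M:a$, giving $\pi\{\eta\}$ of $\Delta'\vdash M:a$: on Var replace each $f_j$ by $f_j\circ g_j$; on Abs apply $\{\eta\oplus\langle 1\rangle\}$ to the premise; on App replace the morphism $\theta$ by $\theta\circ\eta$. Left action of $g:a\to b$ in $D$, giving $[g]\pi$ of $\Delta\vdash M:b$: on Var replace $f_i$ by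 $\langle g\rangle\circ f_i$; on Abs with $g=\langle\alpha,\vec g\rangle\Rightarrow g'$ ($\langle\alpha,\vec g\rangle:\vec b\to\vec a$) the premise becomes $([g']\pi)\{1_\Delta\oplus\langle\alpha,\vec g\rangle\}$; on App apply $[1\Rightarrow g]$ to the premise for $M$. Congruence $\sim$: the smallest equivalence relation compatible with the typing rules and containing: (i) for $\langle\alpha,f_1,\dots,f_{k'}\rangle:\vec a=\langle a_1,\dots,a_k\rangle\to\vec b=\langle b_1,\dots,b_{k'}\rangle$ in $SD$, the App-derivation with premises $\pi_0$ of $\Gamma_0\vdash M:\vec b\Rightarrow a$, $[f_i]\pi_{\alpha(i)}$ of $\Gamma_{\alpha(i)}\vdash N:b_i$ ($1\le i\le k'$) and morphism $(1\otimes\alpha^{\star})\circ\eta$ is equivalent to the App-derivation with premises $[\langle\alpha,\vec f\rangle\Rightarrow 1]\pi_0$ of $\Gamma_0\vdash M:\vec a\Rightarrow a$, $\pi_i$ of $\Gamma_i\vdash N:a_i$ ($1\le i\le k$) and morphism $\eta:\Delta\to\bigotimes_{j=0}^k\Gamma_j$; (ii) for $\theta_j:\Gamma_j\to\Gamma'_j$, the App-derivation with premises $\pi_0\{\theta_0\},\pi_i\{\theta_i\}$ and morphism $\eta:\Delta\to\bigotimes\Gamma_j$ is equivalent to the one with premises $\pi_0,\pi_i$ (contexts $\Gamma'_j$) and morphism $(\bigotimes_j\theta_j)\circ\eta$. $T_D(M)_{\vec x}(\Delta,a)$ is the set of $\sim$-classes $\tilde\pi$ of derivations $\pi$ of $\Delta\vdash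 M:a$ in $E^S_A$, and for $\eta:\Delta'\to\Delta$, $f:a\to a'$ it maps $\tilde\pi$ to the class of $[f](\pi\{\eta\})$. *)

(* Defs.v *)
(* Concrete, "raw data + validity predicate" encoding of the categories       *)
(* D_A, SD, (SD)^n, of the Set-valued functors [[M]]_x and T_D(M)_x, and of    *)
(* natural isomorphisms between them.  Sets are represented as setoids        *)
(* (carrier type + validity predicate + equivalence relation on valid         *)
(* elements), which is how the coend / congruence quotients are expressed.    *)
From mathcomp Require Import all_boot.

Set Implicit Arguments.
Unset Strict Implicit.
Unset Printing Implicit Defensive.

(* Small categories (arrow presentation; cmp f g is "f then g", meaningful    *)
(* when cod f = dom g).                                                       *)
Record smallcat := SmallCat {
  Ob : Type;
  Mor : Type;
  dom : Mor -> Ob;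
  cod : Mor -> Ob;
  idm : Ob -> Mor;
  cmp : Mor -> Mor -> Mor;
  dom_idm : forall o, dom (idm o) = o;
  cod_idm : forall o, cod (idm o) = o;
  dom_cmp : forall f g, cod f = dom g -> dom (cmp f g) = dom f;
  cod_cmp : forall f g, cod f = dom g -> cod (cmp f g) = cod g;
  cmp1m : forall f, cmp (idm (dom f)) f = f;
  cmpm1 : forall f, cmp f (idm (cod f)) = f;
  cmpA : forall f g h, cod f = dom g -> cod g = dom h ->
           cmp (cmp f g) h = cmp f (cmp g h)
}.

(* The class C of maps between finite ordinals. *)
Inductive cls := Bij | Inj | Surj | AllF.

Inductive term := Var (x : nat) | Lam (x : nat) (M : term) | App (M N : term).

Fixpoint fv (M : term) : seq nat :=
  match M with
  | Var x => [:: x]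
  | Lam x M => [seq y <- fv M | y != x]
  | App M N => fv M ++ fv N
  end.

(* 0-based position of variable x in the list xs (last occurrence, so that an *)
(* inner binder shadows an outer one).                                         *)
Definition vidx (xs : seq nat) (x : nat) : nat := (size xs).-1 - index x (rev xs).

Section Sem.
Variable A : smallcat.
Variable C : cls.

(* A map al : [size al] -> [n] (0-based, i |-> nth 0 al i) belongs to C. *)
Definition inC (n : nat) (al : seq nat) : bool :=
  match C with
  | Bij => uniq al && all (fun j => j \in al) (iota 0 n)
  | Inj => uniq al
  | Surj => all (fun j => j \in al) (iota 0 n)
  | AllF => true
  end.

(* Objects of D = D_A *)
Inductive ty := atom (o : Ob A) | arr (l : seq ty) (a : ty).

(* Raw morphisms of D: rA m (atomic), rArr al fs g = <al, fs> => g *)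
Inductive rmor := rA (m : Mor A) | rArr (al : seq nat) (fs : seq rmor) (g : rmor).

(* raw morphisms of SD: <al, fs> *)
Definition smor := (seq nat * seq rmor)%type.
Definition s0 : smor := ([::], [::]).
(* objects / raw morphisms of (SD)^n *)
Definition ctx := seq (seq ty).
Definition cmor := seq smor.

Fixpoint tyd (f : rmor) (a b : ty) {struct f} : Prop :=
  match f with
  | rA m => a = atom (dom m) /\ b = atom (cod m)
  | rArr al fs g =>
      match a, b with
      | arr l a0, arr l' b0 =>
          (* <al, fs> : l' -> l in SD, g : a0 -> b0 *)
          tyd g a0 b0 /\ size al = size l /\ size fs = size l /\
          all (fun j => j < size l') al /\ inC (size l') al /\
          (fix go (fs : seq rmor) (i : nat) {struct fs} : Prop :=
             match fs with
             | [::] => True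
             | h :: t =>
                 (forall x y, onth l' (nth 0 al i) = Some x -> onth l i = Some y ->
                    tyd h x y) /\ go t i.+1
             end) fs 0
      | _, _ => False
      end
  end.

Definition styd (p : smor) (xs ys : seq ty) : Prop :=
  size p.1 = size ys /\ size p.2 = size ys /\ all (fun j => j < size xs) p.1 /\
  inC (size xs) p.1 /\
  forall i f x y, i < size ys -> onth p.2 i = Some f ->
    onth xs (nth 0 p.1 i) = Some x -> onth ys i = Some y -> tyd f x y.

Definition ctyd (e : cmor) (D D' : ctx) : Prop :=
  size e = size D /\ size D' = size D /\
  forall p, p < size D -> styd (nth s0 e p) (nth [::] D p) (nth [::] D' p).

Fixpoint rid (a : ty) : rmor :=
  match a with
  | atom o => rA (idm o)
  | arr l b => rArr (iota 0 (size l))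
                 ((fix m (l : seq ty) := match l with [::] => [::] | x :: t => rid x :: m t end) l)
                 (rid b)
  end.
Definition sid (l : seq ty) : smor := (iota 0 (size l), map rid l).
Definition cid (D : ctx) : cmor := map sid D.

(* composition ("f then g"), by recursion on a fuel that is always sufficient *)
Fixpoint rsize (f : rmor) : nat :=
  match f with
  | rA _ => 1
  | rArr _ fs g =>
      (rsize g + (fix sz (fs : seq rmor) := match fs with [::] => 0 | h :: t => rsize h + sz t end) fs).+1
  end.

(* composite of <al,fs> then <be,gs> in SD is <al o be, (g_i o f_(be i))_i> *)
Definition scompWith (c : rmor -> rmor -> rmor) (p q : smor) : smor :=
  (map (nth 0 p.1) q.1,
   [seq c (nth ig.2 p.2 (nth 0 q.1 ig.1)) ig.2 | ig <- zip (iota 0 (size q.2)) q.2]).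

Fixpoint rcompF (n : nat) (f g : rmor) : rmor :=
  match n with
  | 0 => f
  | n'.+1 =>
      match f, g with
      | rA m, rA m' => rA (cmp m m')
      | rArr al fs f0, rArr be gs g0 =>
          (* (<al,fs> => f0) then (<be,gs> => g0) = (<be,gs> then <al,fs>) => (f0 then g0) *)
          let q := scompWith (rcompF n') (be, gs) (al, fs) in
          rArr q.1 q.2 (rcompF n' f0 g0)
      | _, _ => f
      end
  end.
Definition rcomp (f g : rmor) : rmor := rcompF (rsize f + rsize g) f g.
Definition scomp (p q : smor) : smor := scompWith rcomp p q.
Definition ccomp (e th : cmor) : cmor := [seq scomp pq.1 pq.2 | pq <- zip e th].

Definition ctensor (G D : ctx) : ctx := [seq x.1 ++ x.2 | x <- zip G D].
Definition bigtensor (n : nat) (Gs : seq ctx) : ctx := foldr ctensor (nseq n [::]) Gs.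

(* tensor of morphisms th_j : Gs_j -> Gs'_j  (sources Gs given) *)
Definition stens (szs : seq nat) (ps : seq smor) : smor :=
  (flatten [seq map (addn (sumn (take j szs))) (nth s0 ps j).1 | j <- iota 0 (size ps)],
   flatten (map snd ps)).
Definition ctensormor (n : nat) (Gs : seq ctx) (ths : seq cmor) : cmor :=
  [seq stens [seq size (nth [::] G p) | G <- Gs] [seq nth s0 th p | th <- ths]
  | p <- iota 0 n].

(* be^* : bigtensor Gs -> bigtensor (map (nth [::] Gs) be)  (identities) *)
Definition blockmap (n : nat) (Gs : seq ctx) (be : seq nat) : cmor :=
  [seq let szs := [seq size (nth [::] G p) | G <- Gs] in
       (flatten [seq [seq sumn (take j szs) + q | q <- iota 0 (nth 0 szs j)] | j <- be],
        flatten [seq map rid (nth [::] (nth [::] Gs j) p) | j <- be])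
  | p <- iota 0 n].

Definition unitctx (n i : nat) (a : ty) : ctx :=
  [seq if p == i then [:: a] else [::] | p <- iota 0 n].
Definition unitmor (n i : nat) (f : rmor) : cmor :=
  [seq if p == i then ([:: 0], [:: f]) else s0 | p <- iota 0 n].

(* Set-valued functors ((SD)^n)^o x D -> Set, as setoids:                     *)
(*   el D a x   : x represents an element of F(D,a)                          *)
(*   eqv D a x y: x and y represent the same element of F(D,a)                *)
(*   act D a D' a' e f x : F(e,f)(x) in F(D',a'), for e : D' -> D, f : a -> a' *)
Record SF := MkSF {
  car : Type;
  dflt : car;
  el : ctx -> ty -> car -> Prop;
  eqv : ctx -> ty -> car -> car -> Prop;
  act : ctx -> ty -> ctx -> ty -> cmor -> rmor -> car -> car
}.
Arguments dflt : clear implicits.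
Arguments el : clear implicits.
Arguments eqv : clear implicits.
Arguments act : clear implicits.

Definition nat_iso (F G : SF) : Prop :=
  exists (phi : ctx -> ty -> car F -> car G) (psi : ctx -> ty -> car G -> car F),
    (forall D a x, el F D a x -> el G D a (phi D a x)) /\
    (forall D a y, el G D a y -> el F D a (psi D a y)) /\
    (forall D a x x', eqv F D a x x' -> eqv G D a (phi D a x) (phi D a x')) /\
    (forall D a y y', eqv G D a y y' -> eqv F D a (psi D a y) (psi D a y')) /\
    (forall D a x, el F D a x -> eqv F D a (psi D a (phi D a x)) x) /\
    (forall D a y, el G D a y -> eqv G D a (phi D a (psi D a y)) y) /\
    (forall D a D' a' e f x, ctyd e D' D -> tyd f a a' -> el F D a x ->
       eqv G D' a' (phi D' a' (act F D a D' a' e f x)) (act G D a D' a' e f (phi D a x))).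

Definition var_sf (xs : seq nat) (x : nat) : SF :=
  {| car := cmor; dflt := [::];
     el D a g := x \in xs /\ ctyd g D (unitctx (size xs) (vidx xs x) a);
     eqv D a g g' := (x \in xs /\ ctyd g D (unitctx (size xs) (vidx xs x) a)) /\ g = g';
     act D a D' a' e f g := ccomp e (ccomp g (unitmor (size xs) (vidx xs x) f)) |}.

Definition lam_sf (S : SF) : SF :=
  {| car := car S; dflt := dflt S;
     el D a m := match a with arr l b => el S (rcons D l) b m | atom _ => False end;
     eqv D a m m' := match a with arr l b => eqv S (rcons D l) b m m' | atom _ => False end;
     act D a D' a' e f m :=
       match a, a', f with
       | arr l b, arr l' b', rArr al gs g => act S (rcons D l) b (rcons D' l') b' (rcons e (al, gs)) g m
       | _, _, _ => m
       end |}.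

(* elements of the coend for MN: (as, Gs = G_0..G_k, m, ns = n_1..n_k, theta) *)
Record appd (X Y : Type) := AppD {
  ad_as : seq ty; ad_G : seq ctx; ad_m : X; ad_ns : seq Y; ad_th : cmor }.

Section App.
Variables (n : nat) (SM SN : SF).

Definition app_el (D : ctx) (a : ty) (x : appd (car SM) (car SN)) : Prop :=
  let: AppD as_ Gs m ns th := x in
  size Gs = (size as_).+1 /\ all (fun G => size G == n) Gs /\
  el SM (nth [::] Gs 0) (arr as_ a) m /\ size ns = size as_ /\
  (forall i, i < size as_ -> el SN (nth [::] Gs i.+1) (nth a as_ i) (nth (dflt SN) ns i)) /\
  ctyd th D (bigtensor n Gs).

Inductive app_eqv (D : ctx) (a : ty) : appd (car SM) (car SN) -> appd (car SM) (car SN) -> Prop :=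
| ae_refl x : app_el D a x -> app_eqv D a x x
| ae_sym x y : app_eqv D a x y -> app_eqv D a y x
| ae_trans x y z : app_eqv D a x y -> app_eqv D a y z -> app_eqv D a x z
| ae_cmp as_ Gs m m' ns ns' th :
    app_el D a (AppD as_ Gs m ns th) -> app_el D a (AppD as_ Gs m' ns' th) ->
    eqv SM (nth [::] Gs 0) (arr as_ a) m m' ->
    (forall i, i < size as_ ->
       eqv SN (nth [::] Gs i.+1) (nth a as_ i) (nth (dflt SN) ns i) (nth (dflt SN) ns' i)) ->
    app_eqv D a (AppD as_ Gs m ns th) (AppD as_ Gs m' ns' th)
| ae_i as_ bs G0 Gs al fs m ns e :
    styd (al, fs) as_ bs -> size Gs = size as_ -> all (fun G => size G == n) (G0 :: Gs) ->
    el SM G0 (arr bs a) m -> size ns = size as_ ->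
    (forall i, i < size as_ -> el SN (nth [::] Gs i) (nth a as_ i) (nth (dflt SN) ns i)) ->
    ctyd e D (bigtensor n (G0 :: Gs)) ->
    app_eqv D a
      (AppD as_ (G0 :: Gs) (act SM G0 (arr bs a) G0 (arr as_ a) (cid G0) (rArr al fs (rid a)) m) ns e)
      (AppD bs (G0 :: map (nth [::] Gs) al) m
         [seq act SN (nth [::] Gs (nth 0 al i)) (nth a as_ (nth 0 al i))
                     (nth [::] Gs (nth 0 al i)) (nth a bs i)
                     (cid (nth [::] Gs (nth 0 al i))) (nth (rid a) fs i)
                     (nth (dflt SN) ns (nth 0 al i)) | i <- iota 0 (size bs)]
         (ccomp e (blockmap n (G0 :: Gs) (0 :: map S al))))
| ae_ii as_ Gs Gs' ths m ns e :
    size Gs = (size as_).+1 -> size Gs' = size Gs -> size ths = size Gs ->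
    all (fun G => size G == n) Gs -> all (fun G => size G == n) Gs' ->
    (forall j, j < size Gs -> ctyd (nth [::] ths j) (nth [::] Gs j) (nth [::] Gs' j)) ->
    el SM (nth [::] Gs' 0) (arr as_ a) m -> size ns = size as_ ->
    (forall i, i < size as_ -> el SN (nth [::] Gs' i.+1) (nth a as_ i) (nth (dflt SN) ns i)) ->
    ctyd e D (bigtensor n Gs) ->
    app_eqv D a
      (AppD as_ Gs
         (act SM (nth [::] Gs' 0) (arr as_ a) (nth [::] Gs 0) (arr as_ a) (nth [::] ths 0)
              (rid (arr as_ a)) m)
         [seq act SN (nth [::] Gs' i.+1) (nth a as_ i) (nth [::] Gs i.+1) (nth a as_ i)
                     (nth [::] ths i.+1) (rid (nth a as_ i)) (nth (dflt SN) ns i)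
         | i <- iota 0 (size as_)] e)
      (AppD as_ Gs' m ns (ccomp e (ctensormor n Gs ths))).

Definition app_act (D : ctx) (a : ty) (D' : ctx) (a' : ty) (e : cmor) (f : rmor)
  (x : appd (car SM) (car SN)) : appd (car SM) (car SN) :=
  let: AppD as_ Gs m ns th := x in
  AppD as_ Gs
    (act SM (nth [::] Gs 0) (arr as_ a) (nth [::] Gs 0) (arr as_ a') (cid (nth [::] Gs 0))
         (rArr (iota 0 (size as_)) (map rid as_) f) m)
    ns (ccomp e th).

Definition app_sf : SF :=
  {| car := appd (car SM) (car SN);
     dflt := AppD [::] [::] (dflt SM) [::] [::];
     el := app_el; eqv := app_eqv; act := app_act |}.
End App.

Fixpoint sem (xs : seq nat) (M : term) : SF :=
  match M with
  | Var x => var_sf xs x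
  | Lam x M' => lam_sf (sem (rcons xs x) M')
  | App M1 N => app_sf (size xs) (sem xs M1) (sem xs N)
  end.

(* derivations; each node records the data (morphisms, premise contexts and   *)
(* types) that are not determined by the conclusion judgment                  *)
Inductive deriv :=
| dVar (fs : cmor)
| dAbs (l : seq ty) (p : deriv)
| dApp (as_ : seq ty) (Gs : seq ctx) (p0 : deriv) (ps : seq deriv) (e : cmor).

Definition d0 := dVar [::].

Inductive der_ok : seq nat -> ctx -> term -> ty -> deriv -> Prop :=
| okVar xs D x a fs :
    x \in xs -> ctyd fs D (unitctx (size xs) (vidx xs x) a) ->
    der_ok xs D (Var x) a (dVar fs)
| okAbs xs D x M l a p :
    der_ok (rcons xs x) (rcons D l) M a p -> der_ok xs D (Lam x M) (arr l a) (dAbs l p)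
| okApp xs D M N a as_ Gs p0 ps e :
    size Gs = (size as_).+1 -> all (fun G => size G == size xs) Gs ->
    der_ok xs (nth [::] Gs 0) M (arr as_ a) p0 -> size ps = size as_ ->
    (forall i, i < size as_ -> der_ok xs (nth [::] Gs i.+1) N (nth a as_ i) (nth d0 ps i)) ->
    ctyd e D (bigtensor (size xs) Gs) ->
    der_ok xs D (App M N) a (dApp as_ Gs p0 ps e).

Fixpoint ract (e : cmor) (p : deriv) : deriv :=
  match p with
  | dVar fs => dVar (ccomp e fs)
  | dAbs l p' => dAbs l (ract (rcons e (sid l)) p')
  | dApp as_ Gs p0 ps th => dApp as_ Gs p0 ps (ccomp e th)
  end.

(* left action [g]p, for p a derivation of D |- M : _ and g : _ -> b *)
Fixpoint lact (xs : seq nat) (D : ctx) (M : term) (b : ty) (g : rmor) (p : deriv) : deriv :=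
  match p, M with
  | dVar fs, Var x => dVar (ccomp fs (unitmor (size xs) (vidx xs x) g))
  | dAbs l p', Lam x M' =>
      match g, b with
      | rArr al gs g', arr l' b0 =>
          dAbs l' (ract (rcons (cid D) (al, gs)) (lact (rcons xs x) (rcons D l) M' b0 g' p'))
      | _, _ => p
      end
  | dApp as_ Gs p0 ps th, App M1 _ =>
      dApp as_ Gs (lact xs (nth [::] Gs 0) M1 (arr as_ b) (rArr (iota 0 (size as_)) (map rid as_) g) p0)
           ps th
  | _, _ => p
  end.

Inductive cong : seq nat -> ctx -> term -> ty -> deriv -> deriv -> Prop :=
| c_refl xs D M a p : der_ok xs D M a p -> cong xs D M a p p
| c_sym xs D M a p q : cong xs D M a p q -> cong xs D M a q p
| c_trans xs D M a p q r : cong xs D M a p q -> cong xs D M a q r -> cong xs D M a p r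
| c_abs xs D x M l a p p' :
    cong (rcons xs x) (rcons D l) M a p p' -> cong xs D (Lam x M) (arr l a) (dAbs l p) (dAbs l p')
| c_app xs D M N a as_ Gs p0 p0' ps ps' e :
    der_ok xs D (App M N) a (dApp as_ Gs p0 ps e) ->
    der_ok xs D (App M N) a (dApp as_ Gs p0' ps' e) ->
    cong xs (nth [::] Gs 0) M (arr as_ a) p0 p0' ->
    (forall i, i < size as_ ->
       cong xs (nth [::] Gs i.+1) N (nth a as_ i) (nth d0 ps i) (nth d0 ps' i)) ->
    cong xs D (App M N) a (dApp as_ Gs p0 ps e) (dApp as_ Gs p0' ps' e)
| c_i xs D M N a as_ bs G0 Gs al fs p0 ps e :
    styd (al, fs) as_ bs -> size Gs = size as_ ->
    all (fun G => size G == size xs) (G0 :: Gs) ->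
    der_ok xs G0 M (arr bs a) p0 -> size ps = size as_ ->
    (forall i, i < size as_ -> der_ok xs (nth [::] Gs i) N (nth a as_ i) (nth d0 ps i)) ->
    ctyd e D (bigtensor (size xs) (G0 :: Gs)) ->
    cong xs D (App M N) a
      (dApp bs (G0 :: map (nth [::] Gs) al) p0
         [seq lact xs (nth [::] Gs (nth 0 al i)) N (nth a bs i) (nth (rid a) fs i)
                   (nth d0 ps (nth 0 al i)) | i <- iota 0 (size bs)]
         (ccomp e (blockmap (size xs) (G0 :: Gs) (0 :: map S al))))
      (dApp as_ (G0 :: Gs) (lact xs G0 M (arr as_ a) (rArr al fs (rid a)) p0) ps e)
| c_ii xs D M N a as_ Gs Gs' ths p0 ps e :
    size Gs = (size as_).+1 -> size Gs' = size Gs -> size ths = size Gs ->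
    all (fun G => size G == size xs) Gs -> all (fun G => size G == size xs) Gs' ->
    (forall j, j < size Gs -> ctyd (nth [::] ths j) (nth [::] Gs j) (nth [::] Gs' j)) ->
    der_ok xs (nth [::] Gs' 0) M (arr as_ a) p0 -> size ps = size as_ ->
    (forall i, i < size as_ -> der_ok xs (nth [::] Gs' i.+1) N (nth a as_ i) (nth d0 ps i)) ->
    ctyd e D (bigtensor (size xs) Gs) ->
    cong xs D (App M N) a
      (dApp as_ Gs (ract (nth [::] ths 0) p0)
         [seq ract (nth [::] ths i.+1) (nth d0 ps i) | i <- iota 0 (size as_)] e)
      (dApp as_ Gs' p0 ps (ccomp e (ctensormor (size xs) Gs ths))).

Definition TD (xs : seq nat) (M : term) : SF :=
  {| car := deriv; dflt := d0;
     el D a p := der_ok xs D M a p;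
     eqv D a := cong xs D M a;
     act D a D' a' e f p := lact xs D' M a' f (ract e p) |}.

End Sem.

(* Main.v *)
Require Import Defs.
From mathcomp Require Import all_boot.
From Stdlib Require Import Setoid.
From mathcomp Require Import zify.
Set Implicit Arguments. Unset Strict Implicit. Unset Printing Implicit Defensive.

Section Cat.
Variable A : smallcat.
Variable C : cls.
Local Notation ty := (ty A).
Local Notation rmor := (rmor A).
Local Notation tyd := (@tyd A C).
Local Notation styd := (@styd A C).
Local Notation ctyd := (@ctyd A C).

Definition goF (l l' : seq ty) (al : seq nat) :=
  fix go (fs : seq rmor) (i : nat) {struct fs} : Prop :=
             match fs with
             | [::] => True
             | h :: t =>
                 (forall x y, onth l' (nth 0 al i) = Some x -> onth l i = Some y ->
                    tyd h x y) /\ go t i.+1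
             end.

Lemma tyd_arr_unfold al fs g l a0 l' b0 :
  tyd (rArr al fs g) (arr l a0) (arr l' b0) =
  (tyd g a0 b0 /\ size al = size l /\ size fs = size l /\
          all (fun j => j < size l') al /\ inC C (size l') al /\ goF l l' al fs 0).
Proof. reflexivity. Qed.

Lemma goFE l l' al fs k : goF l l' al fs k <->
  (forall i h, onth fs i = Some h -> forall x y, onth l' (nth 0 al (k+i)) = Some x ->
      onth l (k+i) = Some y -> tyd h x y).
Proof.
elim: fs k => [|h t IH] k /=; first by split=> // _ [].
split.
- move=> [H1 /IH H2] [|i] h' /=; first by case=> <-; rewrite addn0.
  by move=> Hi x y; rewrite -addSnnS; apply: H2.
- move=> H; split; first by move=> x y; rewrite -{1}(addn0 k) -{2}(addn0 k); apply: H.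
  by apply/IH => i h' Hi x y; rewrite addSnnS; apply: (H i.+1).
Qed.

Lemma tyd_arrE al fs g l a0 l' b0 :
  tyd (rArr al fs g) (arr l a0) (arr l' b0) <-> tyd g a0 b0 /\ styd (al, fs) l' l.
Proof.
rewrite tyd_arr_unfold goFE /Defs.styd /=; split.
- move=> [H1 [H2 [H3 [H4 [H5 H6]]]]]; do 5 (split=> //).
  by move=> i f x y _ Hf; move: (H6 i f Hf x y); rewrite !add0n.
- move=> [H1 [H2 [H3 [H4 [H5 H6]]]]]; do 5 (split=> //).
  move=> i h Hh x y; rewrite !add0n => Hx Hy; apply: (H6 i) => //.
  by rewrite -H3; move: Hh; case: ltnP => // Hle; rewrite onth_default.
Qed.

Lemma tyd_inv_atom f o b : tyd f (atom o) b ->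
  exists m, [/\ f = rA m, o = dom m & b = atom (cod m)].
Proof. by case: f => [m|al fs g] //= [[->] ->]; exists m. Qed.

Lemma tyd_inv_arr f l a0 b : tyd f (arr l a0) b ->
  exists al fs g l' b0, [/\ f = rArr al fs g, b = arr l' b0, tyd g a0 b0 & styd (al, fs) l' l].
Proof.
case: f => [m [] //|al fs g]; case: b => [o|l' b0]; first by [].
by move/tyd_arrE=> [H1 H2]; exists al, fs, g, l', b0.
Qed.

Lemma onth_nthS T (d : T) s i : i < size s -> onth s i = Some (nth d s i).
Proof. by elim: s i => [|x s IH] [|i] //= /IH. Qed.

Lemma styd_nth p X Y d dx : styd p X Y <->
  [/\ size p.1 = size Y, size p.2 = size Y, all (fun j => j < size X) p.1, inC C (size X) p.1 &
    forall i, i < size Y -> tyd (nth d p.2 i) (nth dx X (nth 0 p.1 i)) (nth dx Y i)].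
Proof.
rewrite /Defs.styd; split.
- move=> [H1 [H2 [H3 [H4 H5]]]]; split=> // i Hi; apply: (H5 i) => //.
  + by apply: onth_nthS; rewrite H2.
  + by apply: onth_nthS; move/allP: H3; apply; apply: mem_nth; rewrite H1.
  + by apply: onth_nthS.
- move=> [H1 H2 H3 H4 H5]; do 4 (split=> //).
  move=> i f x y Hi Hf Hx Hy.
  have Hin : nth 0 p.1 i < size X by move/allP: H3; apply; apply: mem_nth; rewrite H1.
  move: (H5 i Hi).
  by rewrite (onth_nth d _ _ _ Hf) (onth_nth dx _ _ _ Hx) (onth_nth dx _ _ _ Hy).
Qed.


Local Notation rsize := (@rsize A).
Local Notation rcomp := (@rcomp A).
Local Notation scomp := (@scomp A).
Local Notation rid := (@rid A).

Lemma rsize_arr al fs g : rsize (rArr al fs g) = (rsize g + sumn (map rsize fs)).+1.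
Proof. by rewrite /=; congr (_ + _).+1; elim: fs => //= h t ->. Qed.

Lemma rsize_gt0 f : 0 < rsize f.
Proof. by case: f. Qed.

Lemma rsize_nth d s k : rsize (nth d s k) <= maxn (rsize d) (sumn (map rsize s)).
Proof.
elim: s k => [|x s IH] [|k] /=; rewrite ?nth_nil ?leq_maxl //; first by lia.
by move: (IH k); lia.
Qed.

Lemma rsize_nth_in d s k : k < size s -> rsize (nth d s k) <= sumn (map rsize s).
Proof.
elim: s k => [|x s IH] [|k] //=; first by lia.
by move/IH; lia.
Qed.

Lemma map_zip_ext U (F G : nat * rmor -> U) fs k :
  (forall i h, rsize h <= sumn (map rsize fs) -> F (i, h) = G (i, h)) ->
  [seq F ig | ig <- zip (iota k (size fs)) fs] = [seq G ig | ig <- zip (iota k (size fs)) fs].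
Proof.
elim: fs k => [|h t IH] k //= H; congr (_ :: _); first by apply: H; lia.
by apply: IH => i h' Hh; apply: H; lia.
Qed.

Lemma rcompF_fuel n m f g : maxn (rsize f) (rsize g) <= n -> maxn (rsize f) (rsize g) <= m ->
  rcompF n f g = rcompF m f g.
Proof.
elim: n m f g => [|n IH] [|m] f g; rewrite ?leqn0 ?maxn_eq0; try by move: (rsize_gt0 f); lia.
case: f => [mm|al fs f0]; case: g => [mm'|be gs g0] //.
rewrite !rsize_arr => H1 H2 /=.
congr (rArr _ _ _).
  apply: map_zip_ext => i h Hh /=; apply: IH.
  + by move: (rsize_nth h gs (nth 0 al i)); lia.
  + by move: (rsize_nth h gs (nth 0 al i)); lia.
by apply: IH; lia.
Qed.

Lemma rcompE n f g : maxn (rsize f) (rsize g) <= n -> rcompF n f g = rcomp f g.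
Proof. by move=> H; apply: rcompF_fuel => //; lia. Qed.

Lemma rcomp_atom m m' : rcomp (rA m) (rA m') = rA (cmp m m').
Proof. by []. Qed.

Lemma rcomp_arr al fs f0 be gs g0 :
  rcomp (rArr al fs f0) (rArr be gs g0) =
  rArr (scomp (be, gs) (al, fs)).1 (scomp (be, gs) (al, fs)).2 (rcomp f0 g0).
Proof.
rewrite /rcomp !rsize_arr addSn /= /scomp /scompWith /=.
congr (rArr _ _ _).
  apply: map_zip_ext => i h Hh /=; apply: rcompE.
  by move: (rsize_nth h gs (nth 0 al i)); rewrite -/rsize; lia.
by apply: rcompE; lia.
Qed.

Lemma rid_arr l b : rid (arr l b) = rArr (iota 0 (size l)) (map rid l) (rid b).
Proof. by rewrite /=; congr (rArr _ _ _); elim: l => //= x l ->. Qed.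

Lemma scomp1 p q : (scomp p q).1 = map (nth 0 p.1) q.1.
Proof. by []. Qed.

Lemma size_scomp2 p q : size (scomp p q).2 = size q.2.
Proof. by rewrite /scomp /scompWith /= size_map size_zip size_iota minnn. Qed.

Lemma nth_scomp2 p q d i : i < size q.2 -> nth 0 q.1 i < size p.2 ->
  nth d (scomp p q).2 i = rcomp (nth d p.2 (nth 0 q.1 i)) (nth d q.2 i).
Proof.
move=> Hi Hj.
rewrite /scomp /scompWith /= (nth_map (0, d)) ?size_zip ?size_iota ?minnn //.
by rewrite nth_zip ?size_iota // nth_iota //= (set_nth_default d).
Qed.

Lemma inC_iota n : inC C n (iota 0 n).
Proof.
by case: C; rewrite /inC ?iota_uniq //=; apply/allP.
Qed.

Lemma inC_comp X Y (p1 q1 : seq nat) : size p1 = Y -> all (fun j => j < X) p1 ->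
  all (fun j => j < Y) q1 -> inC C X p1 -> inC C Y q1 -> inC C X (map (nth 0 p1) q1).
Proof.
move=> Hs HX HY.
have Huniq : uniq p1 -> uniq q1 -> uniq (map (nth 0 p1) q1).
  move=> U1 U2; rewrite map_inj_in_uniq // => j k Hj Hk /eqP.
  rewrite nth_uniq // ?Hs; first by move/eqP.
  - by move/allP: HY; apply.
  - by move/allP: HY; apply.
have Hsurj : all (fun j => j \in p1) (iota 0 X) -> all (fun j => j \in q1) (iota 0 Y) ->
   all (fun j => j \in map (nth 0 p1) q1) (iota 0 X).
  move=> /allP S1 /allP S2; apply/allP => j Hj.
  have := S1 j Hj; move/(nthP 0) => [k Hk <-].
  by apply: map_f; apply: (S2 k); rewrite mem_iota add0n -Hs Hk.
rewrite /inC; case: C => //.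
by move=> /andP[U1 A1] /andP[U2 A2]; rewrite Huniq //= Hsurj.
Qed.

Lemma ty_ind' (P : ty -> Prop) :
  (forall o, P (atom o)) ->
  (forall l a, (forall i x, onth l i = Some x -> P x) -> P a -> P (arr l a)) ->
  forall t, P t.
Proof.
move=> Ha Hr; fix IH 1; case=> [o|l a]; first exact: Ha.
apply: Hr; last exact: IH.
move: l; fix IHl 1; move=> l i x; case: l => [|y l'].
  rewrite onth0n => H; discriminate H.
case: i => [|i] /=.
  move=> [Hyx]; rewrite -Hyx; exact: (IH y).
exact: IHl.
Qed.

Lemma eq_from_nth' T (s1 s2 : seq T) : size s1 = size s2 ->
  (forall x0 i, i < size s1 -> nth x0 s1 i = nth x0 s2 i) -> s1 = s2.
Proof.
case: s1 => [|x s1] H1 H2; first by case: s2 H1 H2.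
by apply: (eq_from_nth (x0 := x)) => // i; apply: H2.
Qed.

Lemma styd_nthI p X Y :
  size p.1 = size Y -> size p.2 = size Y -> all (fun j => j < size X) p.1 -> inC C (size X) p.1 ->
  (forall d dx i, i < size Y -> tyd (nth d p.2 i) (nth dx X (nth 0 p.1 i)) (nth dx Y i)) ->
  styd p X Y.
Proof.
move=> H1 H2 H3 H4 H5; do 4 (split=> //).
move=> i f x y Hi Hf Hx Hy.
by move: (H5 f x i Hi); rewrite (onth_nth f _ _ _ Hf) (onth_nth x _ _ _ Hx) (onth_nth x _ _ _ Hy).
Qed.

Lemma stydE p X Y : styd p X Y ->
  [/\ size p.1 = size Y, size p.2 = size Y, all (fun j => j < size X) p.1, inC C (size X) p.1 &
    forall d dx i, i < size Y -> tyd (nth d p.2 i) (nth dx X (nth 0 p.1 i)) (nth dx Y i)].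
Proof.
move=> H; have [H1 [H2 [H3 [H4 _]]]] := H; split=> // d dx.
by have /(styd_nth p X Y d dx) [] := H.
Qed.

Lemma styd_in p X Y i : styd p X Y -> i < size Y -> nth 0 p.1 i < size X.
Proof.
move=> /stydE [H1 _ H3 _ _] Hi; move/allP: H3; apply; apply: mem_nth; by rewrite H1.
Qed.

Lemma styd_scompH p q X Y Z : styd p X Y -> styd q Y Z ->
  (forall d dx i, i < size Z ->
     tyd (rcomp (nth d p.2 (nth 0 q.1 i)) (nth d q.2 i))
         (nth dx X (nth 0 p.1 (nth 0 q.1 i))) (nth dx Z i)) ->
  styd (scomp p q) X Z.
Proof.
move=> Hp Hq H; have [P1 P2 P3 P4 P5] := stydE Hp; have [Q1 Q2 Q3 Q4 Q5] := stydE Hq.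
apply: styd_nthI.
- by rewrite scomp1 size_map.
- by rewrite size_scomp2.
- rewrite scomp1; apply/allP => j /mapP [k Hk ->].
  have Hk' : k < size p.1 by rewrite P1; move/allP: Q3; apply.
  by move/allP: P3; apply; apply: mem_nth.
- by rewrite scomp1; apply: (inC_comp P1 P3 Q3 P4 Q4).
- move=> d dx i Hi.
  have Hqi := styd_in Hq Hi.
  rewrite nth_scomp2 ?Q2 ?P2 // scomp1 (nth_map 0) ?Q1 //.
  exact: H.
Qed.

Lemma pair_eta (T U : Type) (x : T * U) : (x.1, x.2) = x.
Proof. by case: x. Qed.

Lemma scomp_assocH p q r X Y Z W : styd p X Y -> styd q Y Z -> styd r Z W ->
  (forall d i, i < size W ->
     rcomp (rcomp (nth d p.2 (nth 0 q.1 (nth 0 r.1 i))) (nth d q.2 (nth 0 r.1 i))) (nth d r.2 i) =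
     rcomp (nth d p.2 (nth 0 q.1 (nth 0 r.1 i))) (rcomp (nth d q.2 (nth 0 r.1 i)) (nth d r.2 i))) ->
  scomp (scomp p q) r = scomp p (scomp q r).
Proof.
move=> Hp Hq Hr H; have [P1 P2 P3 P4 P5] := stydE Hp; have [Q1 Q2 Q3 Q4 Q5] := stydE Hq;
have [R1 R2 R3 R4 R5] := stydE Hr.
rewrite -[LHS]pair_eta -[RHS]pair_eta; congr (_, _).
- rewrite !scomp1 -map_comp; apply/eq_in_map => j Hj /=.
  rewrite (nth_map 0) // Q1; by move/allP: R3; apply.
- apply: eq_from_nth'; first by rewrite !size_scomp2.
  move=> d i; rewrite size_scomp2 => Hi.
  have HiW : i < size W by rewrite -R2.
  have Hri := styd_in Hr HiW.
  have Hqri := styd_in Hq Hri.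
  rewrite nth_scomp2 ?size_scomp2 ?Q2 //.
  rewrite nth_scomp2 ?P2 ?R2 //.
  rewrite nth_scomp2 ?scomp1 ?(nth_map 0) ?P2 ?R1 -?R2 // ?Q1 //.
  rewrite nth_scomp2 ?Q2 //.
  apply: H. all: rewrite /= ?size_scomp2 ?Q2 ?R2 //.
Qed.

Lemma scomp_idlH p X Y : styd p X Y ->
  (forall d dx i, i < size Y -> rcomp (rid (nth dx X (nth 0 p.1 i))) (nth d p.2 i) = nth d p.2 i) ->
  scomp (sid X) p = p.
Proof.
move=> Hp H; have [P1 P2 P3 P4 P5] := stydE Hp.
rewrite -[LHS]pair_eta -[RHS]pair_eta; congr (_, _).
- rewrite scomp1 /= -[RHS]map_id; apply/eq_in_map => j Hj /=.
  by rewrite nth_iota //; move/allP: P3; apply.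
- apply: eq_from_nth'; first by rewrite size_scomp2.
  move=> d i; rewrite size_scomp2 => Hi.
  have HiY : i < size Y by rewrite -P2.
  have Hpi := styd_in Hp HiY.
  have [dx] : inhabited ty by case: (X) Hpi => // x _; constructor.
  rewrite nth_scomp2 //= ?size_map //.
  by rewrite (set_nth_default (rid dx)) ?size_map // (nth_map dx) // H // -P2.
Qed.

Lemma scomp_idrH p X Y : styd p X Y ->
  (forall d dx i, i < size Y -> rcomp (nth d p.2 i) (rid (nth dx Y i)) = nth d p.2 i) ->
  scomp p (sid Y) = p.
Proof.
move=> Hp H; have [P1 P2 P3 P4 P5] := stydE Hp.
rewrite -[LHS]pair_eta -[RHS]pair_eta; congr (_, _).
- by rewrite scomp1 /= -P1 -/(mkseq _ _) mkseq_nth.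
- apply: eq_from_nth'; first by rewrite size_scomp2 /= size_map.
  move=> d i; rewrite size_scomp2 => Hi.
  have HiY : i < size Y by move: Hi; rewrite /= size_map.
  have [dx] : inhabited ty by case: (Y) HiY => // x _; constructor.
  rewrite nth_scomp2 // ?nth_iota ?P2 //.
  by rewrite add0n /= (@set_nth_default _ (map rid Y) (rid dx)) ?size_map // (nth_map dx) // H.
Qed.

Lemma styd_sidH X :
  (forall dx i, i < size X -> tyd (rid (nth dx X i)) (nth dx X i) (nth dx X i)) ->
  styd (sid X) X X.
Proof.
move=> H; apply: styd_nthI => /=.
- by rewrite size_iota.
- by rewrite size_map.
- by apply/allP => j; rewrite mem_iota.
- exact: inC_iota.
- move=> d dx i Hi; rewrite nth_iota // (set_nth_default (rid dx)) ?size_map // (nth_map dx) //.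
  exact: H.
Qed.

Lemma tyd_rid a : tyd (rid a) a a.
Proof.
elim/ty_ind': a => [o|l a IHl IHa]; first by rewrite /= dom_idm cod_idm.
rewrite rid_arr; apply/tyd_arrE; split=> //.
apply: styd_sidH => dx i Hi; apply: (IHl i); exact: onth_nthS.
Qed.

Lemma styd_sid X : styd (sid X) X X.
Proof. by apply: styd_sidH => dx i Hi; apply: tyd_rid. Qed.

Lemma rcomp_typ n : forall f g a b c, rsize f + rsize g <= n -> tyd f a b -> tyd g b c ->
  tyd (rcomp f g) a c.
Proof.
elim: n => [|n IH] f g a b c Hn; first by move: (rsize_gt0 f); lia.
case: a => [o|l a0] Hf.
- case/tyd_inv_atom: Hf => m [-> -> ->] /tyd_inv_atom [m' [-> Hd ->]].
  by rewrite rcomp_atom /= dom_cmp ?cod_cmp.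
- move: Hn; case/tyd_inv_arr: Hf => al [fs [f0 [l' [b0 [-> -> Hf0 Hs]]]]].
  move=> Hn /tyd_inv_arr [be [gs [g0 [l'' [c0 [Eg Ec Hg0 Hs']]]]]]; subst g c; move: Hn.
  rewrite !rsize_arr => Hn.
  rewrite rcomp_arr; apply/tyd_arrE; split; first by apply: (IH _ _ _ b0) => //; lia.
  rewrite pair_eta; apply: (styd_scompH Hs' Hs) => d dx i Hi.
  have [S1 S2 S3 S4 S5] := stydE Hs; have [T1 T2 T3 T4 T5] := stydE Hs'.
  have Hai := styd_in Hs Hi.
  apply: (IH _ _ _ (nth dx l' (nth 0 al i))).
  + have Hai' : nth 0 al i < size gs by rewrite T2.
    have Hi' : i < size fs by rewrite S2.
    have := rsize_nth_in d Hai'; have := rsize_nth_in d Hi'.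
    rewrite /=; lia.
  + exact: T5.
  + exact: S5.
Qed.

Lemma rcomp_id n : forall f a b, rsize f <= n -> tyd f a b ->
  rcomp (rid a) f = f /\ rcomp f (rid b) = f.
Proof.
elim: n => [|n IH] f a b Hn; first by move: (rsize_gt0 f); lia.
case: a => [o|l a0] Hf.
- case/tyd_inv_atom: Hf => m [-> -> ->].
  by split; rewrite /rcomp /= ?cmp1m ?cmpm1.
- move: Hn; case/tyd_inv_arr: Hf => al [fs [f0 [l' [b0 [-> -> Hf0 Hs]]]]].
  rewrite rsize_arr => Hn.
  have [S1 S2 S3 S4 S5] := stydE Hs.
  rewrite !rid_arr !rcomp_arr; split.
  + have -> : (iota 0 (size l), map rid l) = sid l by [].
    rewrite (scomp_idrH Hs); first by rewrite (proj1 (IH f0 a0 b0 _ Hf0)) //; lia.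
    move=> d dx i Hi; apply: (proj2 (IH _ _ _ _ (S5 d dx i Hi))).
    have Hi' : i < size fs by rewrite S2.
    have := rsize_nth_in d Hi'; rewrite /=; lia.
  + have -> : (iota 0 (size l'), map rid l') = sid l' by [].
    rewrite (scomp_idlH Hs); first by rewrite (proj2 (IH f0 a0 b0 _ Hf0)) //; lia.
    move=> d dx i Hi; apply: (proj1 (IH _ _ _ _ (S5 d dx i Hi))).
    have Hi' : i < size fs by rewrite S2.
    have := rsize_nth_in d Hi'; rewrite /=; lia.
Qed.

Lemma rcomp_assoc n : forall f g h a b c d, rsize f + rsize g + rsize h <= n ->
  tyd f a b -> tyd g b c -> tyd h c d -> rcomp (rcomp f g) h = rcomp f (rcomp g h).
Proof.
elim: n => [|n IH] f g h a b c d Hn; first by move: (rsize_gt0 f); lia.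
case: a => [o|l1 a1] Hf.
- case/tyd_inv_atom: Hf => m [Ef Eo Eb]; subst f b.
  move=> /tyd_inv_atom [m' [Eg Hd Ec]]; subst g c.
  move=> /tyd_inv_atom [m'' [Eh Hd' Ed]]; subst h.
  by rewrite !rcomp_atom cmpA.
- move: Hn; case/tyd_inv_arr: Hf => al [fs [f0 [l2 [a2 [-> -> Hf0 Hs1]]]]].
  move=> Hn /tyd_inv_arr [be [gs [g0 [l3 [a3 [Eg Ec Hg0 Hs2]]]]]]; subst g c.
  move=> /tyd_inv_arr [ga [hs [h0 [l4 [a4 [Eh Ed Hh0 Hs3]]]]]]; subst h d; move: Hn.
  rewrite !rsize_arr => Hn.
  have E : scomp (scomp (ga, hs) (be, gs)) (al, fs) = scomp (ga, hs) (scomp (be, gs) (al, fs)).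
    apply: (scomp_assocH Hs3 Hs2 Hs1) => dd i Hi.
    have [S1 S2 S3 S4 S5] := stydE Hs1; have [T1 T2 T3 T4 T5] := stydE Hs2;
    have [U1 U2 U3 U4 U5] := stydE Hs3.
    have [dx] : inhabited ty by case: (l1) Hi => // x _; constructor.
    have Hai := styd_in Hs1 Hi.
    have Hbai := styd_in Hs2 Hai.
    apply: (IH _ _ _ _ _ _ _ _ (U5 dd dx _ Hbai) (T5 dd dx _ Hai) (S5 dd dx _ Hi)).
    have Hi' : i < size fs by rewrite S2.
    have Hai' : nth 0 al i < size gs by rewrite T2.
    have Hbai' : nth 0 be (nth 0 al i) < size hs by rewrite U2.
    have := rsize_nth_in dd Hi'; have := rsize_nth_in dd Hai'; have := rsize_nth_in dd Hbai'.
    rewrite /=; lia.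
  rewrite !rcomp_arr !pair_eta E; congr (rArr _ _ _).
  by apply: IH Hf0 Hg0 Hh0; lia.
Qed.

Lemma rcomp_typ' f g a b c : tyd f a b -> tyd g b c -> tyd (rcomp f g) a c.
Proof. exact: (rcomp_typ (leqnn _)). Qed.

Lemma rcomp_idl f a b : tyd f a b -> rcomp (rid a) f = f.
Proof. by move=> H; case: (rcomp_id (leqnn _) H). Qed.

Lemma rcomp_idr f a b : tyd f a b -> rcomp f (rid b) = f.
Proof. by move=> H; case: (rcomp_id (leqnn _) H). Qed.

Lemma rcomp_assoc' f g h a b c d : tyd f a b -> tyd g b c -> tyd h c d ->
  rcomp (rcomp f g) h = rcomp f (rcomp g h).
Proof. exact: (rcomp_assoc (leqnn _)). Qed.

Lemma styd_scomp p q X Y Z : styd p X Y -> styd q Y Z -> styd (scomp p q) X Z.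
Proof.
move=> Hp Hq; apply: (styd_scompH Hp Hq) => d dx i Hi.
have [P1 P2 P3 P4 P5] := stydE Hp; have [Q1 Q2 Q3 Q4 Q5] := stydE Hq.
exact: (rcomp_typ' (P5 d dx _ (styd_in Hq Hi)) (Q5 d dx _ Hi)).
Qed.

Lemma scomp_assoc p q r X Y Z W : styd p X Y -> styd q Y Z -> styd r Z W ->
  scomp (scomp p q) r = scomp p (scomp q r).
Proof.
move=> Hp Hq Hr; apply: (scomp_assocH Hp Hq Hr) => d i Hi.
have [P1 P2 P3 P4 P5] := stydE Hp; have [Q1 Q2 Q3 Q4 Q5] := stydE Hq;
have [R1 R2 R3 R4 R5] := stydE Hr.
have [dx] : inhabited ty by case: (W) Hi => // x _; constructor.
have Hri := styd_in Hr Hi.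
exact: (rcomp_assoc' (P5 d dx _ (styd_in Hq Hri)) (Q5 d dx _ Hri) (R5 d dx _ Hi)).
Qed.

Lemma scomp_idl p X Y : styd p X Y -> scomp (sid X) p = p.
Proof.
move=> Hp; apply: (scomp_idlH Hp) => d dx i Hi.
have [P1 P2 P3 P4 P5] := stydE Hp.
exact: (rcomp_idl (P5 d dx _ Hi)).
Qed.

Lemma scomp_idr p X Y : styd p X Y -> scomp p (sid Y) = p.
Proof.
move=> Hp; apply: (scomp_idrH Hp) => d dx i Hi.
have [P1 P2 P3 P4 P5] := stydE Hp.
exact: (rcomp_idr (P5 d dx _ Hi)).
Qed.

Local Notation ccomp := (@ccomp A).
Local Notation cid := (@cid A).
Local Notation s0 := (@s0 A).

Lemma size_ccomp e th : size (ccomp e th) = minn (size e) (size th).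
Proof. by rewrite size_map size_zip. Qed.

Lemma nth_ccomp e th p : p < size e -> size e = size th ->
  nth s0 (ccomp e th) p = scomp (nth s0 e p) (nth s0 th p).
Proof.
move=> Hp Hs; rewrite (nth_map (s0, s0)) ?size_zip -?Hs ?minnn //.
by rewrite nth_zip.
Qed.

Lemma ctydE e D D' : ctyd e D D' ->
  [/\ size e = size D, size D' = size D &
      forall p, p < size D -> styd (nth s0 e p) (nth [::] D p) (nth [::] D' p)].
Proof. by move=> [H1 [H2 H3]]. Qed.

Lemma ctydI e D D' : size e = size D -> size D' = size D ->
  (forall p, p < size D -> styd (nth s0 e p) (nth [::] D p) (nth [::] D' p)) -> ctyd e D D'.
Proof. by move=> H1 H2 H3; split; [|split]. Qed.

Lemma ctyd_ccomp e th D1 D2 D3 : ctyd e D1 D2 -> ctyd th D2 D3 -> ctyd (ccomp e th) D1 D3.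
Proof.
move=> /ctydE [E1 E2 E3] /ctydE [T1 T2 T3].
apply: ctydI.
- by rewrite size_ccomp E1 T1 E2 minnn.
- by rewrite T2 E2.
- move=> p Hp; rewrite nth_ccomp ?E1 ?T1 ?E2 //.
  by apply: styd_scomp (E3 _ Hp) (T3 _ _); rewrite E2.
Qed.

Lemma ccomp_assoc e th k D1 D2 D3 D4 : ctyd e D1 D2 -> ctyd th D2 D3 -> ctyd k D3 D4 ->
  ccomp (ccomp e th) k = ccomp e (ccomp th k).
Proof.
move=> He Ht Hk; have [E1 E2 E3] := ctydE He; have [T1 T2 T3] := ctydE Ht;
have [K1 K2 K3] := ctydE Hk.
apply: (eq_from_nth (x0 := s0)).
  by rewrite !size_ccomp E1 T1 K1 T2 E2 !minnn.
rewrite !size_ccomp E1 T1 K1 T2 E2 !minnn => p Hp.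
have Hp2 : p < size D2 by rewrite E2.
have Hp3 : p < size D3 by rewrite T2.
rewrite !nth_ccomp ?size_ccomp ?E1 ?T1 ?K1 ?T2 ?E2 ?K2 ?minnn //.
by apply: scomp_assoc (E3 _ Hp) (T3 _ Hp2) (K3 _ Hp3).
Qed.

Lemma nth_cid D p : p < size D -> nth s0 (cid D) p = sid (nth [::] D p).
Proof. by move=> Hp; rewrite (nth_map [::]). Qed.

Lemma size_cid D : size (cid D) = size D.
Proof. by rewrite size_map. Qed.

Lemma ctyd_cid D : ctyd (cid D) D D.
Proof.
apply: ctydI => //; first by rewrite size_cid.
by move=> p Hp; rewrite nth_cid //; apply: styd_sid.
Qed.

Lemma ccomp_idl e D D' : ctyd e D D' -> ccomp (cid D) e = e.
Proof.
move=> He; have [E1 E2 E3] := ctydE He.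
apply: (eq_from_nth (x0 := s0)); first by rewrite size_ccomp size_cid E1 minnn.
rewrite size_ccomp size_cid E1 minnn => p Hp.
by rewrite nth_ccomp ?size_cid ?E1 // nth_cid // (scomp_idl (E3 _ Hp)).
Qed.

Lemma ccomp_idr e D D' : ctyd e D D' -> ccomp e (cid D') = e.
Proof.
move=> He; have [E1 E2 E3] := ctydE He.
apply: (eq_from_nth (x0 := s0)); first by rewrite size_ccomp size_cid E1 E2 minnn.
rewrite size_ccomp size_cid E1 E2 minnn => p Hp.
have Hp' : p < size D' by rewrite E2.
by rewrite nth_ccomp ?size_cid ?E1 ?E2 // nth_cid // (scomp_idr (E3 _ Hp)).
Qed.

Lemma ctyd_rcons e D D' p l l' : ctyd e D D' -> styd p l l' ->
  ctyd (rcons e p) (rcons D l) (rcons D' l').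
Proof.
move=> /ctydE [E1 E2 E3] Hp; apply: ctydI; rewrite ?size_rcons ?E1 ?E2 //.
move=> q; rewrite ltnS leq_eqVlt => /orP [/eqP ->|Hq].
  by rewrite !nth_rcons E1 E2 !ltnn !eqxx.
by rewrite !nth_rcons E1 E2 Hq; apply: E3.
Qed.

Lemma ccomp_rcons e th p q : size e = size th ->
  ccomp (rcons e p) (rcons th q) = rcons (ccomp e th) (scomp p q).
Proof. by move=> H; rewrite /Defs.ccomp zip_rcons // map_rcons. Qed.

Lemma cid_rcons D l : cid (rcons D l) = rcons (cid D) (sid l).
Proof. by rewrite /Defs.cid map_rcons. Qed.

Local Notation unitmor := (@unitmor A).
Local Notation unitctx := (@unitctx A).

Lemma ctyd_unitmor n i f a b : tyd f a b -> ctyd (unitmor n i f) (unitctx n i a) (unitctx n i b).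
Proof.
move=> Hf; apply: ctydI; rewrite ?size_map //.
move=> p; rewrite size_iota => Hp; rewrite /Defs.unitmor /Defs.unitctx.
rewrite !(nth_map 0) ?size_iota // nth_iota //=.
case: (p == i).
- apply: styd_nthI => //=; first by rewrite /inC; case: C.
  by move=> d dx [|j] //= _.
- by apply: styd_nthI => //=; rewrite /inC; case: C.
Qed.

Lemma unitmor_rid n i a : unitmor n i (rid a) = cid (unitctx n i a).
Proof.
by rewrite /Defs.unitmor /Defs.cid /Defs.unitctx -map_comp; apply: eq_map => p /=; case: (p == i).
Qed.

Local Notation der_ok := (@der_ok A C).
Local Notation ract := (@ract A).
Local Notation lact := (@lact A).

Lemma ract_ok xs D M a p e D' : der_ok xs D M a p -> ctyd e D' D -> der_ok xs D' M a (ract e p).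
Proof.
move=> Hd; elim: Hd e D' => {xs D M a p}.
- move=> xs D x a fs Hx Hfs e D' He /=; apply: okVar => //; exact: ctyd_ccomp He Hfs.
- move=> xs D x M l a p Hp IH e D' He /=; apply: okAbs; apply: IH.
  by apply: ctyd_rcons He (styd_sid l).
- move=> xs D M N a as_ Gs p0 ps th H1 H2 H3 _ H4 H5 _ H6 e D' He /=.
  apply: okApp => //; exact: ctyd_ccomp He H6.
Qed.

Lemma tyd_idarr l g a b : tyd g a b -> tyd (rArr (iota 0 (size l)) (map rid l) g) (arr l a) (arr l b).
Proof. by move=> H; apply/tyd_arrE; split=> //; apply: styd_sid. Qed.

Lemma lact_ok xs D M a p g b : der_ok xs D M a p -> tyd g a b -> der_ok xs D M b (lact xs D M b g p).
Proof.
move=> Hd; elim: Hd g b => {xs D M a p}.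
- move=> xs D x a fs Hx Hfs g b Hg /=; apply: okVar => //.
  exact: ctyd_ccomp Hfs (ctyd_unitmor _ _ Hg).
- move=> xs D x M l a p Hp IH g b /tyd_inv_arr [al [gs [g' [l' [b0 [-> -> Hg' Hs]]]]]] /=.
  apply: okAbs; apply: ract_ok; first exact: IH Hg'.
  exact: ctyd_rcons (ctyd_cid D) Hs.
- move=> xs D M N a as_ Gs p0 ps th H1 H2 H3 IH3 H4 H5 _ H6 g b Hg /=.
  apply: okApp => //; first by apply: IH3; exact: tyd_idarr.
  by move=> i Hi; rewrite (set_nth_default a) //; exact: H5.
Qed.

Lemma ract_ract xs D M a p e' D' e D'' : der_ok xs D M a p -> ctyd e' D' D -> ctyd e D'' D' ->
  ract e (ract e' p) = ract (ccomp e e') p.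
Proof.
move=> Hd; elim: Hd e' D' e D'' => {xs D M a p}.
- move=> xs D x a fs Hx Hfs e' D' e D'' He' He /=.
  by rewrite (ccomp_assoc He He' Hfs).
- move=> xs D x M l a p Hp IH e' D' e D'' He' He /=.
  rewrite (IH _ _ _ _ (ctyd_rcons He' (styd_sid l)) (ctyd_rcons He (styd_sid l))).
  have [E1 E2 _] := ctydE He; have [E1' E2' _] := ctydE He'.
  by rewrite ccomp_rcons ?E1 ?E1' ?E2 // (scomp_idl (styd_sid l)).
- move=> xs D M N a as_ Gs p0 ps th H1 H2 H3 _ H4 H5 _ H6 e' D' e D'' He' He /=.
  by rewrite (ccomp_assoc He He' H6).
Qed.

Lemma ract_cid xs D M a p : der_ok xs D M a p -> ract (cid D) p = p.
Proof.
elim => {xs D M a p}.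
- by move=> xs D x a fs Hx Hfs /=; rewrite (ccomp_idl Hfs).
- by move=> xs D x M l a p Hp IH /=; rewrite -cid_rcons IH.
- by move=> xs D M N a as_ Gs p0 ps th H1 H2 H3 _ H4 H5 _ H6 /=; rewrite (ccomp_idl H6).
Qed.

Lemma lact_ract xs D M a p e D' g b : der_ok xs D M a p -> ctyd e D' D -> tyd g a b ->
  lact xs D' M b g (ract e p) = ract e (lact xs D M b g p).
Proof.
move=> Hd; elim: Hd e D' g b => {xs D M a p}.
- move=> xs D x a fs Hx Hfs e D' g b He Hg /=.
  by rewrite (ccomp_assoc He Hfs (ctyd_unitmor _ _ Hg)).
- move=> xs D x M l a p Hp IH e D' g b He /tyd_inv_arr [al [gs [g' [l' [b0 [-> -> Hg' Hs]]]]]] /=.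
  have He1 := ctyd_rcons He (styd_sid l).
  rewrite (IH _ _ _ _ He1 Hg').
  have Hq := lact_ok Hp Hg'.
  rewrite (ract_ract Hq He1 (ctyd_rcons (ctyd_cid D') Hs)).
  rewrite (ract_ract Hq (ctyd_rcons (ctyd_cid D) Hs) (ctyd_rcons He (styd_sid l'))).
  have [E1 E2 _] := ctydE He.
  rewrite !ccomp_rcons ?size_cid ?E1 ?E2 //.
  by rewrite (ccomp_idl He) (ccomp_idr He) (scomp_idr Hs) (scomp_idl Hs).
- by [].
Qed.

Lemma lact_rid xs D M a p : der_ok xs D M a p -> lact xs D M a (rid a) p = p.
Proof.
elim => {xs D M a p}.
- move=> xs D x a fs Hx Hfs /=.
  by rewrite unitmor_rid (ccomp_idr Hfs).
- move=> xs D x M l a p Hp IH; rewrite rid_arr /= IH.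
  have -> : (iota 0 (size l), map rid l) = sid l by [].
  by rewrite -cid_rcons (ract_cid Hp).
- move=> xs D M N a as_ Gs p0 ps th H1 H2 H3 IH3 H4 H5 _ H6 /=.
  by rewrite -rid_arr IH3.
Qed.

End Cat.

Unset Implicit Arguments.

Section Main.
Variable A : smallcat.
Variable C : cls.
Local Notation ty := (ty A).
Local Notation ctx := (ctx A).
Local Notation rmor := (rmor A).
Local Notation deriv := (deriv A).
Local Notation tyd := (@tyd A C).
Local Notation styd := (@styd A C).
Local Notation ctyd := (@ctyd A C).
Local Notation der_ok := (@der_ok A C).
Local Notation cong := (@cong A C).
Local Notation sem := (sem A C).
Local Notation d0 := (d0 A).

Fixpoint phi (xs : seq nat) (M : term) : ctx -> ty -> car (sem xs M) -> deriv :=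
  match M return ctx -> ty -> car (sem xs M) -> deriv with
  | Var x => fun D a g => dVar g
  | Lam x M' => fun D a m =>
      match a with
      | arr l b => dAbs l (phi (rcons xs x) M' (rcons D l) b m)
      | atom _ => d0
      end
  | App M1 N => fun D a (y : appd A (car (sem xs M1)) (car (sem xs N))) =>
      let: AppD as_ Gs m ns th := y in
      dApp as_ Gs (phi xs M1 (nth [::] Gs 0) (arr as_ a) m)
        [seq phi xs N (nth [::] Gs i.+1) (nth a as_ i) (nth (dflt (sem xs N)) ns i)
        | i <- iota 0 (size as_)] th
  end.

Fixpoint psi (xs : seq nat) (M : term) : ctx -> ty -> deriv -> car (sem xs M) :=
  match M return ctx -> ty -> deriv -> car (sem xs M) with
  | Var x => fun D a p => match p with dVar fs => fs | _ => [::] end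
  | Lam x M' => fun D a p =>
      match a, p with
      | arr l b, dAbs _ p' => psi (rcons xs x) M' (rcons D l) b p'
      | _, _ => dflt (sem (rcons xs x) M')
      end
  | App M1 N => fun D a p =>
      match p with
      | dApp as_ Gs p0 ps th =>
          AppD as_ Gs (psi xs M1 (nth [::] Gs 0) (arr as_ a) p0)
            [seq psi xs N (nth [::] Gs i.+1) (nth a as_ i) (nth d0 ps i) | i <- iota 0 (size as_)] th
      | _ => @AppD A _ _ [::] [::] (dflt (sem xs M1)) [::] [::]
      end
  end.

Record Good (xs : seq nat) (M : term) : Prop := {
  g_el : forall D a x, @el A (sem xs M) D a x -> der_ok xs D M a (phi xs M D a x);
  g_el' : forall D a p, der_ok xs D M a p -> @el A (sem xs M) D a (psi xs M D a p);
  g_rt1 : forall D a x, @el A (sem xs M) D a x -> psi xs M D a (phi xs M D a x) = x;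
  g_rt2 : forall D a p, der_ok xs D M a p -> phi xs M D a (psi xs M D a p) = p;
  g_eqv : forall D a x x', @eqv A (sem xs M) D a x x' -> cong xs D M a (phi xs M D a x) (phi xs M D a x');
  g_eqv' : forall D a p p', cong xs D M a p p' -> @eqv A (sem xs M) D a (psi xs M D a p) (psi xs M D a p');
  g_nat : forall D a D' a' e f x, ctyd e D' D -> tyd f a a' -> @el A (sem xs M) D a x ->
     phi xs M D' a' (@act A (sem xs M) D a D' a' e f x) = lact xs D' M a' f (ract e (phi xs M D a x));
  g_actel : forall D a D' a' e f x, ctyd e D' D -> tyd f a a' -> @el A (sem xs M) D a x ->
     @el A (sem xs M) D' a' (@act A (sem xs M) D a D' a' e f x);
  g_refl : forall D a x, @el A (sem xs M) D a x -> @eqv A (sem xs M) D a x x;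
  g_sym : forall D a x y, @eqv A (sem xs M) D a x y -> @eqv A (sem xs M) D a y x;
  g_trans : forall D a x y z, @eqv A (sem xs M) D a x y -> @eqv A (sem xs M) D a y z -> @eqv A (sem xs M) D a x z
}.

Arguments g_el {xs M} _ {D a x}.
Arguments g_el' {xs M} _ {D a p}.
Arguments g_rt1 {xs M} _ {D a x}.
Arguments g_rt2 {xs M} _ {D a p}.
Arguments g_eqv {xs M} _ {D a x x'}.
Arguments g_eqv' {xs M} _ {D a p p'}.
Arguments g_nat {xs M} _ {D a D' a' e f x}.
Arguments g_actel {xs M} _ {D a D' a' e f x}.
Arguments g_refl {xs M} _ {D a x}.
Arguments g_sym {xs M} _ {D a x y}.
Arguments g_trans {xs M} _ {D a x y z}.

Set Implicit Arguments. Unset Strict Implicit.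

Lemma good_PN xs M : Good xs M -> forall D a D' a' e f p, der_ok xs D M a p -> ctyd e D' D -> tyd f a a' ->
  psi xs M D' a' (lact xs D' M a' f (ract e p)) = @act A (sem xs M) D a D' a' e f (psi xs M D a p).
Proof.
move=> G D a D' a' e f p Hp He Hf.
have Hy := g_el' G Hp.
rewrite -{1}(g_rt2 G Hp) -(g_nat G He Hf Hy).
by rewrite (g_rt1 G (g_actel G He Hf Hy)).
Qed.

Lemma der_var_inv xs D x a p : der_ok xs D (Var x) a p ->
  exists fs, [/\ p = dVar fs, x \in xs & ctyd fs D (unitctx (size xs) (vidx xs x) a)].
Proof. by move=> H; inversion H; subst; eexists. Qed.

Lemma der_lam_inv xs D x M a p : der_ok xs D (Lam x M) a p ->
  exists l b p', [/\ a = arr l b, p = dAbs l p' & der_ok (rcons xs x) (rcons D l) M b p'].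
Proof. by move=> H; inversion H; subst; do 3 eexists. Qed.

Lemma der_app_inv xs D M N a p : der_ok xs D (App M N) a p ->
  exists as_ Gs p0 ps e, p = dApp as_ Gs p0 ps e /\
   [/\ size Gs = (size as_).+1, all (fun G => size G == size xs) Gs,
       der_ok xs (nth [::] Gs 0) M (arr as_ a) p0, size ps = size as_ &
       (forall i, i < size as_ -> der_ok xs (nth [::] Gs i.+1) N (nth a as_ i) (nth d0 ps i)) /\
       ctyd e D (bigtensor (size xs) Gs)].
Proof. by move=> H; inversion H; subst; do 5 eexists; split. Qed.

Lemma nth_mapi T (F : nat -> T) d n i : i < n -> nth d [seq F j | j <- iota 0 n] i = F i.
Proof. by move=> Hi; rewrite (nth_map 0) ?size_iota // nth_iota. Qed.

Lemma map_iota_nth T (d : T) s n : size s = n -> [seq nth d s i | i <- iota 0 n] = s.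
Proof. by move=> <-; exact: mkseq_nth. Qed.

Lemma good_var xs x : Good xs (Var x).
Proof.
split.
- by move=> D a g /= [Hx Hg]; apply: okVar.
- by move=> D a p /der_var_inv [fs [-> Hx Hfs]].
- by [].
- by move=> D a p /der_var_inv [fs [-> _ _]].
- by move=> D a g g' /= [[Hx Hg] <-]; apply: c_refl; apply: okVar.
- move=> D a p p' H.
  have K : forall xs0 D0 T a0 q q', cong xs0 D0 T a0 q q' -> xs0 = xs -> T = Var x ->
     @eqv A (sem xs (Var x)) D0 a0 (psi xs (Var x) D0 a0 q) (psi xs (Var x) D0 a0 q').
    move=> xs0 D0 T a0 q q'; elim => {xs0 D0 T a0 q q' D a p p' H}.
    + move=> xs0 D0 T a0 q H Exs ET; subst.
      by have [fs [-> Hx Hfs]] := der_var_inv H.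
    + move=> xs0 D0 T a0 q q' _ IH Exs ET.
      by have [[H1 H2] H3] := IH Exs ET; rewrite -H3; split => //; split.
    + move=> xs0 D0 T a0 q q' r _ IH1 _ IH2 Exs ET.
      have [[H1 H2] H3] := IH1 Exs ET; have [[H4 H5] H6] := IH2 Exs ET.
      by rewrite -H6 -H3; split => //; split.
    + by intros; discriminate.
    + by intros; discriminate.
    + by intros; discriminate.
    + by intros; discriminate.
  exact: K H _ _.
- move=> D a D' a' e f g He Hf /= [Hx Hg].
  by rewrite (ccomp_assoc He Hg (ctyd_unitmor _ _ Hf)).
- move=> D a D' a' e f g He Hf /= [Hx Hg]; split=> //.
  exact: ctyd_ccomp He (ctyd_ccomp Hg (ctyd_unitmor _ _ Hf)).
- by move=> D a g Hg; split.
- by move=> D a g h /= [Hg <-]; split.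
- by move=> D a g h k /= [Hg <-] [Hh <-]; split.
Qed.

Lemma good_lam xs x M : Good (rcons xs x) M -> Good xs (Lam x M).
Proof.
move=> IH.
have Hrefl : forall D a m, @el A (sem xs (Lam x M)) D a m -> @eqv A (sem xs (Lam x M)) D a m m.
  by move=> D [o|l b] m //= Hm; apply: (g_refl IH).
have Hsym : forall D a m m', @eqv A (sem xs (Lam x M)) D a m m' -> @eqv A (sem xs (Lam x M)) D a m' m.
  by move=> D [o|l b] m m' //= Hm; apply: (g_sym IH).
have Htrans : forall D a m m' m'', @eqv A (sem xs (Lam x M)) D a m m' ->
    @eqv A (sem xs (Lam x M)) D a m' m'' -> @eqv A (sem xs (Lam x M)) D a m m''.
  by move=> D [o|l b] m m' m'' //= H1 H2; apply: (g_trans IH H1 H2).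
have Hel' : forall D a p, der_ok xs D (Lam x M) a p ->
    @el A (sem xs (Lam x M)) D a (psi xs (Lam x M) D a p).
  by move=> D a p /der_lam_inv [l [b [p' [-> -> Hp']]]] /=; apply: (g_el' IH).
split => //.
- by move=> D [o|l b] m //= H; apply: okAbs; apply: (g_el IH).
- by move=> D [o|l b] m //= H; apply: (g_rt1 IH).
- by move=> D a p /der_lam_inv [l [b [p' [-> -> Hp']]]] /=; rewrite (g_rt2 IH Hp').
- by move=> D [o|l b] m m' //= H; apply: c_abs; apply: (g_eqv IH).
- move=> D a p p' H.
  have K : forall xs0 D0 T a0 q q', cong xs0 D0 T a0 q q' -> xs0 = xs -> T = Lam x M ->
     @eqv A (sem xs (Lam x M)) D0 a0 (psi xs (Lam x M) D0 a0 q) (psi xs (Lam x M) D0 a0 q').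
    move=> xs0 D0 T a0 q q'; elim => {xs0 D0 T a0 q q' D a p p' H}.
    + move=> xs0 D0 T a0 q H Exs ET; subst.
      by apply: Hrefl; apply: Hel'.
    + move=> xs0 D0 T a0 q q' _ IH1 Exs ET; exact: Hsym (IH1 Exs ET).
    + move=> xs0 D0 T a0 q q' r _ IH1 _ IH2 Exs ET; exact: Htrans (IH1 Exs ET) (IH2 Exs ET).
    + move=> xs0 D0 x0 M0 l a0 q q' H _ Exs [Ex EM]; subst => /=.
      exact: (g_eqv' IH H).
    + by intros; discriminate.
    + by intros; discriminate.
    + by intros; discriminate.
  exact: K H _ _.
- move=> D a D' a' e f m He Hf; case: a Hf => [o|l b] Hf //= Hm.
  case/tyd_inv_arr: Hf => al [gs [g [l' [b' [Ef Ea Hg Hs]]]]]; subst f a' => /=.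
  have He1 : ctyd (rcons e (al, gs)) (rcons D' l') (rcons D l) by apply: ctyd_rcons.
  rewrite (g_nat IH He1 Hg Hm).
  have Hq := lact_ok (g_el IH Hm) Hg.
  have He2 := ctyd_rcons He (styd_sid C l).
  rewrite (lact_ract (g_el IH Hm) He1 Hg) (lact_ract (g_el IH Hm) He2 Hg).
  rewrite (ract_ract Hq He2 (ctyd_rcons (ctyd_cid C D') Hs)).
  have [E1 E2 _] := ctydE He.
  by rewrite ccomp_rcons ?size_cid ?E1 ?E2 // (ccomp_idl He) (scomp_idr Hs).
- move=> D a D' a' e f m He Hf; case: a Hf => [o|l b] Hf //= Hm.
  case/tyd_inv_arr: Hf => al [gs [g [l' [b' [Ef Ea Hg Hs]]]]]; subst f a' => /=.
  by apply: (g_actel IH _ Hg Hm); apply: ctyd_rcons.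
Qed.

Lemma cong_eq xs D T a p q p' q' : cong xs D T a p q -> p = p' -> q = q' -> cong xs D T a p' q'.
Proof. by move=> H <- <-. Qed.

Lemma eqv_eq (S : SF A) D a x y x' y' : @eqv A S D a x y -> x = x' -> y = y' -> @eqv A S D a x' y'.
Proof. by move=> H <- <-. Qed.

Lemma in_iota_lt i n : i \in iota 0 n -> i < n.
Proof. by rewrite mem_iota add0n => /andP[]. Qed.

Lemma good_app xs M N : Good xs M -> Good xs N -> Good xs (App M N).
Proof.
move=> GM GN.
pose SN := sem xs N.
have Hel : forall D a y, @el A (sem xs (App M N)) D a y -> der_ok xs D (App M N) a (phi xs (App M N) D a y).
  move=> D a [as_ Gs m ns th] /= [H1 [H2 [H3 [H4 [H5 H6]]]]].
  apply: okApp => //.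
  - exact: (g_el GM H3).
  - by rewrite size_map size_iota.
  - by move=> i Hi; rewrite nth_mapi //; apply: (g_el GN (H5 i Hi)).
have Hel' : forall D a p, der_ok xs D (App M N) a p -> @el A (sem xs (App M N)) D a (psi xs (App M N) D a p).
  move=> D a p /der_app_inv [as_ [Gs [p0 [ps [e [-> [H1 H2 H3 H4 [H5 H6]]]]]]]] /=.
  do !split => //.
  - exact: (g_el' GM H3).
  - by rewrite size_map size_iota.
  - by move=> i Hi; rewrite nth_mapi //; apply: (g_el' GN (H5 i Hi)).
split => //.
-
  move=> D a [as_ Gs m ns th] /= [H1 [H2 [H3 [H4 [H5 H6]]]]].
  rewrite (g_rt1 GM H3); congr (AppD _ _ _ _ _).
  rewrite -[RHS](map_iota_nth (dflt SN) H4); apply/eq_in_map => i /in_iota_lt Hi.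
  by rewrite nth_mapi // (g_rt1 GN (H5 i Hi)).
-
  move=> D a p /der_app_inv [as_ [Gs [p0 [ps [e [-> [H1 H2 H3 H4 [H5 H6]]]]]]]] /=.
  rewrite (g_rt2 GM H3); congr (dApp _ _ _ _ _).
  rewrite -[RHS](map_iota_nth d0 H4); apply/eq_in_map => i /in_iota_lt Hi.
  by rewrite nth_mapi // (g_rt2 GN (H5 i Hi)).
-
  move=> D a y y' /= H; elim: H => {y y'}.
  + by move=> y Hy; apply: c_refl; apply: Hel.
  + by move=> y y' _ IH; apply: c_sym.
  + by move=> y y' y'' _ IH1 _ IH2; apply: c_trans IH1 IH2.
  + move=> as_ Gs m m' ns ns' th Hy Hy' Hm Hns.
    apply: c_app.
    * exact: (Hel _ _ _ Hy).
    * exact: (Hel _ _ _ Hy').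
    * exact: (g_eqv GM Hm).
    * by move=> i Hi; rewrite !nth_mapi //; apply: (g_eqv GN (Hns i Hi)).
  + move=> as_ bs G0 Gs al fs m ns e Hs HGs Hall Hm Hns Hnsel He.
    have [S1 S2 S3 S4 S5] := stydE Hs.
    pose ps := [seq phi xs N (nth [::] Gs i) (nth a as_ i) (nth (dflt SN) ns i) | i <- iota 0 (size as_)].
    have Hps : size ps = size as_ by rewrite size_map size_iota.
    have Hpsel : forall i, i < size as_ -> der_ok xs (nth [::] Gs i) N (nth a as_ i) (nth d0 ps i).
      by move=> i Hi; rewrite nth_mapi //; apply: (g_el GN (Hnsel i Hi)).
    have Hf' : tyd (rArr al fs (rid a)) (arr bs a) (arr as_ a).
      by apply/tyd_arrE; split; [exact: tyd_rid | exact: Hs].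
    apply: c_sym.
    apply: (cong_eq (c_i Hs HGs Hall (g_el GM Hm) Hps Hpsel He)).
    * rewrite /=; congr (dApp _ _ _ _ _).
      apply/eq_in_map => i /in_iota_lt Hi.
      have Hai := styd_in Hs Hi.
      rewrite (nth_map 0) ?S1 // nth_mapi //.
      rewrite (g_nat GN (ctyd_cid C _) (S5 (rid a) a i Hi) (Hnsel _ Hai)).
      by rewrite (ract_cid (g_el GN (Hnsel _ Hai))) nth_mapi.
    * rewrite /= (g_nat GM (ctyd_cid C G0) Hf' Hm) (ract_cid (g_el GM Hm)).
      by [].
  + move=> as_ Gs Gs' ths m ns e H1 H2 H3 H4 H5 H6 Hm H7 H8 He.
    pose ps := [seq phi xs N (nth [::] Gs' i.+1) (nth a as_ i) (nth (dflt SN) ns i) | i <- iota 0 (size as_)].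
    have Hps : size ps = size as_ by rewrite size_map size_iota.
    have Hpsel : forall i, i < size as_ -> der_ok xs (nth [::] Gs' i.+1) N (nth a as_ i) (nth d0 ps i).
      by move=> i Hi; rewrite nth_mapi //; apply: (g_el GN (H8 i Hi)).
    apply: (cong_eq (c_ii H1 H2 H3 H4 H5 H6 (g_el GM Hm) Hps Hpsel He)).
    * rewrite /=; congr (dApp _ _ _ _ _).
      - have H0 : 0 < size Gs by rewrite H1.
        rewrite (g_nat GM (H6 0 H0) (tyd_rid C _) Hm).
        by rewrite (lact_rid (ract_ok (g_el GM Hm) (H6 0 H0))).
      - apply/eq_in_map => i /in_iota_lt Hi.
        have Hi1 : i.+1 < size Gs by rewrite H1.
        rewrite !nth_mapi // (g_nat GN (H6 _ Hi1) (tyd_rid C _) (H8 i Hi)).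
        by rewrite (lact_rid (ract_ok (g_el GN (H8 i Hi)) (H6 _ Hi1))).
    * by [].
-
  move=> D a p p' H.
  have K : forall xs0 D0 T a0 q q', cong xs0 D0 T a0 q q' -> xs0 = xs -> T = App M N ->
     @eqv A (sem xs (App M N)) D0 a0 (psi xs (App M N) D0 a0 q) (psi xs (App M N) D0 a0 q').
    move=> xs0 D0 T a0 q q'; elim => {xs0 D0 T a0 q q' D a p p' H}.
    + move=> xs0 D0 T a0 q H Exs ET; subst.
      by apply: ae_refl; apply: Hel'.
    + by move=> xs0 D0 T a0 q q' _ IH1 Exs ET; apply: ae_sym; apply: IH1.
    + move=> xs0 D0 T a0 q q' r _ IH1 _ IH2 Exs ET.
      by apply: ae_trans (IH1 Exs ET) (IH2 Exs ET).
    + by intros; discriminate.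
    + move=> xs0 D0 M0 N0 a0 as_ Gs p0 p0' ps ps' e Hd Hd' Hc0 _ Hcs _ Exs [EM EN]; subst => /=.
      apply: ae_cmp.
      * exact: (Hel' _ _ _ Hd).
      * exact: (Hel' _ _ _ Hd').
      * exact: (g_eqv' GM Hc0).
      * by move=> i Hi; rewrite !nth_mapi //; apply: (g_eqv' GN (Hcs i Hi)).
    + move=> xs0 D0 M0 N0 a0 as_ bs G0 Gs al fs p0 ps e Hs HGs Hall Hp0 Hps Hpsel He Exs [EM EN].
      subst => /=.
      have [S1 S2 S3 S4 S5] := stydE Hs.
      pose ns := [seq psi xs N (nth [::] Gs i) (nth a0 as_ i) (nth d0 ps i) | i <- iota 0 (size as_)].
      have Hns : size ns = size as_ by rewrite size_map size_iota.
      have Hnsel : forall i, i < size as_ -> @el A SN (nth [::] Gs i) (nth a0 as_ i) (nth (dflt SN) ns i).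
        by move=> i Hi; rewrite nth_mapi //; apply: (g_el' GN (Hpsel i Hi)).
      have Hf' : tyd (rArr al fs (rid a0)) (arr bs a0) (arr as_ a0).
        by apply/tyd_arrE; split; [exact: tyd_rid | exact: Hs].
      apply: ae_sym.
      apply: (@eqv_eq (sem xs (App M N)) _ _ _ _ _ _ (ae_i Hs HGs Hall (g_el' GM Hp0) Hns Hnsel He)).
      * rewrite -{2}(ract_cid Hp0) (good_PN GM Hp0 (ctyd_cid C G0) Hf').
        by [].
      * congr (AppD _ _ _ _ _).
        apply/eq_in_map => i /in_iota_lt Hi.
        have Hai := styd_in Hs Hi.
        rewrite (nth_map 0) ?S1 // nth_mapi //.
        rewrite -{1}(ract_cid (Hpsel _ Hai)).
        by rewrite (good_PN GN (Hpsel _ Hai) (ctyd_cid C _) (S5 (rid a0) a0 i Hi)) nth_mapi.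
    + move=> xs0 D0 M0 N0 a0 as_ Gs Gs' ths p0 ps e H1 H2 H3 H4 H5 H6 Hp0 Hps Hpsel He Exs [EM EN].
      subst => /=.
      pose ns := [seq psi xs N (nth [::] Gs' i.+1) (nth a0 as_ i) (nth d0 ps i) | i <- iota 0 (size as_)].
      have Hns : size ns = size as_ by rewrite size_map size_iota.
      have Hnsel : forall i, i < size as_ -> @el A SN (nth [::] Gs' i.+1) (nth a0 as_ i) (nth (dflt SN) ns i).
        by move=> i Hi; rewrite nth_mapi //; apply: (g_el' GN (Hpsel i Hi)).
      apply: (@eqv_eq (sem xs (App M N)) _ _ _ _ _ _ (ae_ii H1 H2 H3 H4 H5 H6 (g_el' GM Hp0) Hns Hnsel He)).
      * congr (AppD _ _ _ _ _).
        - have H0 : 0 < size Gs by rewrite H1.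
          have Hr := ract_ok Hp0 (H6 0 H0).
          by rewrite -(lact_rid Hr) (good_PN GM Hp0 (H6 0 H0) (tyd_rid C _)).
        - apply/eq_in_map => i /in_iota_lt Hi.
          have Hi1 : i.+1 < size Gs by rewrite H1.
          have Hr := ract_ok (Hpsel i Hi) (H6 _ Hi1).
          rewrite !nth_mapi //.
          by rewrite -(lact_rid Hr) (good_PN GN (Hpsel i Hi) (H6 _ Hi1) (tyd_rid C _)).
      * by [].
  exact: K H _ _.
-
  move=> D a D' a' e f [as_ Gs m ns th] He Hf /= [H1 [H2 [H3 [H4 [H5 H6]]]]].
  rewrite (g_nat GM (ctyd_cid C _) (tyd_idarr as_ Hf) H3) (ract_cid (g_el GM H3)).
  congr (dApp _ _ _ _ _).
  apply/eq_in_map => i /in_iota_lt Hi.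
  by rewrite (set_nth_default a).
-
  move=> D a D' a' e f [as_ Gs m ns th] He Hf /= [H1 [H2 [H3 [H4 [H5 H6]]]]].
  refine (conj H1 (conj H2 (conj _ (conj H4 (conj _ _))))).
  - exact: (g_actel GM (ctyd_cid C _) (tyd_idarr as_ Hf) H3).
  - by move=> i Hi; rewrite (set_nth_default a) //; apply: H5.
  - exact: ctyd_ccomp He H6.
- by move=> D a y Hy; apply: ae_refl.
- by move=> D a y y' H; apply: ae_sym.
- by move=> D a y y' y'' H1 H2; apply: ae_trans H1 H2.
Qed.

Lemma good_all M : forall xs, Good xs M.
Proof.
elim: M => [x|x M IH|M IHM N IHN] xs.
- exact: good_var.
- exact: good_lam.
- exact: good_app.
Qed.

End Main.

Unset Implicit Arguments.

Theorem theorem3 (A : smallcat) (C : cls) (M : term) (xs : seq nat) :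
  uniq xs -> {subset fv M <= xs} -> nat_iso C (sem A C xs M) (TD A C xs M).
Proof.
move=> _ _; have G := good_all A C M xs.
exists (phi A C xs M), (psi A C xs M).
split; first by move=> D a x H; exact: (g_el _ _ _ _ G _ _ _ H).
split; first by move=> D a y H; exact: (g_el' _ _ _ _ G _ _ _ H).
split; first by move=> D a x x' H; exact: (g_eqv _ _ _ _ G _ _ _ _ H).
split; first by move=> D a y y' H; exact: (g_eqv' _ _ _ _ G _ _ _ _ H).
split; first by move=> D a x H; rewrite (g_rt1 _ _ _ _ G _ _ _ H); apply: (g_refl _ _ _ _ G _ _ _ H).
split; first by move=> D a y H; rewrite (g_rt2 _ _ _ _ G _ _ _ H); apply: c_refl.
move=> D a D' a' e f x He Hf Hx; rewrite (g_nat _ _ _ _ G _ _ _ _ _ _ _ He Hf Hx); apply: c_refl.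
exact: (lact_ok (ract_ok (g_el _ _ _ _ G _ _ _ Hx) He) Hf).
Qed.
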